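(* Let $X\subset\mathbb{R}^n$, let $F(\cdot,\xi)$ be a real-valued random function with $f(x)=\mathbb{E}[F(x,\xi)]$ finite, and let $c\in(0,1]$. For $x\in X$, $y\in\mathbb{R}$, $z>0$ define \[ \phi(x,y,z)=\frac cz\mathbb{E}[(F(x,\xi)-y)_+^2]+y+\frac c4z,\qquad \Phi(x,y)=y+c\,\mathbb{E}^{1/2}[(F(x,\xi)-y)_+^2], \] and $h(x)=f(x)+c\,\mathbb{E}^{1/2}[(F(x,\xi)-f(x))_+^2]$. Then for any $x\in X$ and $y\in\mathbb{R}$, $\inf_{z>0}\phi(x,y,z)=\Phi(x,y)$ is attained at $z=2\mathbb{E}^{1/2}[(F(x,\xi)-y)_+^2]$. Moreover, for any $x\in X$, \[ \inf_{y\ge f(x),z>0}\phi(x,y,z)=\inf_{y\ge f(x)}\Phi(x,y)=h(x), \] attained at $y=f(x)$ and $z=2\mathbb{E}^{1/2}[(F(x,\xi)-f(x))_+^2]$.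
   Context: $(a)_+=\max\{a,0\}$; $F(x,\xi)$ is assumed to have finite second moment for each $x$. *)

(* Defs.v *)
From HB Require Import structures.
From mathcomp Require Import all_boot all_order all_algebra.
From mathcomp Require Import all_classical all_reals all_analysis.
Set Implicit Arguments. Unset Strict Implicit. Unset Printing Implicit Defensive.
Import Order.TTheory GRing.Theory Num.Theory.
Local Open Scope classical_set_scope.
Local Open Scope ring_scope.

Section defs.
Context {d : measure_display} {T : measurableType d} {R : realType}.
Variable (P : probability T R).

Definition ppart (a : R) : R := Num.max a 0.

Definition fmean {n : nat} (F : 'rV[R]_n -> T -> R) (x : 'rV[R]_n) : R :=
  fine ('E_P[F x])%E.

Definition sqpart {n : nat} (F : 'rV[R]_n -> T -> R) (x : 'rV[R]_n) (y : R) : R :=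
  fine ('E_P[fun w => (ppart (F x w - y) ^+ 2)%R])%E.

Definition phi (c : R) {n : nat} (F : 'rV[R]_n -> T -> R) (x : 'rV[R]_n) (y z : R) : R :=
  c / z * sqpart F x y + y + c / 4 * z.

Definition Phi (c : R) {n : nat} (F : 'rV[R]_n -> T -> R) (x : 'rV[R]_n) (y : R) : R :=
  y + c * Num.sqrt (sqpart F x y).

Definition hfun (c : R) {n : nat} (F : 'rV[R]_n -> T -> R) (x : 'rV[R]_n) : R :=
  fmean F x + c * Num.sqrt (sqpart F x (fmean F x)).
End defs.

(* Main.v *)
Require Import Defs.
From HB Require Import structures.
From mathcomp Require Import all_boot all_order all_algebra.
From mathcomp Require Import all_classical all_reals all_analysis.
From mathcomp Require Import ring lra.
Import Order.TTheory GRing.Theory Num.Theory.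
Local Open Scope classical_set_scope.
Local Open Scope ring_scope.

Lemma inf_eq (R : realType) (A : set R) (m : R) :
  (forall a, A a -> m <= a) ->
  (forall e, 0 < e -> exists2 a, A a & a <= m + e) -> inf A = m.
Proof.
move=> lb ap; have hl : has_lbound A by exists m.
have ne : A !=set0 by have [a Aa _] := ap 1 ltr01; exists a.
apply/eqP; rewrite eq_le; apply/andP; split; last exact: lb_le_inf.
apply/ler_addgt0Pr => e e0; have [a Aa ale] := ap e e0.
exact: le_trans (ge_inf hl Aa) ale.
Qed.

Lemma amgm (R : realType) (c S y z : R) : 0 < c -> 0 <= S -> 0 < z ->
  y + c * Num.sqrt S <= c / z * S + y + c / 4 * z.
Proof.
move=> c0 S0 z0; set s := Num.sqrt S.
have -> : S = s ^+ 2 by rewrite sqr_sqrtr.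
have e : c / z * s ^+ 2 + y + c / 4 * z - (y + c * s) = c / (4 * z) * (2 * s - z) ^+ 2.
  by field; rewrite gt_eqF.
rewrite -subr_ge0 e; apply: mulr_ge0; last exact: sqr_ge0.
by apply: divr_ge0; lra.
Qed.

Lemma attain (R : realType) (c S y : R) : 0 < S ->
  c / (2 * Num.sqrt S) * S + y + c / 4 * (2 * Num.sqrt S) = y + c * Num.sqrt S.
Proof.
move=> S0; have s0 : 0 < Num.sqrt S by rewrite sqrtr_gt0.
rewrite -{2}(sqr_sqrtr (ltW S0)); field; rewrite gt_eqF //.
Qed.

Lemma sqrt_key (R : realType) (S1 S2 d : R) : 0 <= S1 -> 0 <= S2 -> 0 < d ->
  (forall t, 0 < t -> S1 <= (1 + t) * S2 + (1 + t^-1) * d ^+ 2) ->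
  Num.sqrt S1 <= Num.sqrt S2 + d.
Proof.
move=> S10 S20 d0 H.
have s0 : 0 <= Num.sqrt S2 by exact: sqrtr_ge0.
suff : S1 <= (Num.sqrt S2 + d) ^+ 2.
  by rewrite -ler_sqrt ?sqr_ge0 // sqrtr_sqr ger0_norm //; lra.
have [S2p|S2z] := ltP 0 S2.
  have sp : 0 < Num.sqrt S2 by rewrite sqrtr_gt0.
  have E : forall s, 0 < s -> s ^+ 2 = S2 ->
      (1 + d / s) * S2 + (1 + (d / s)^-1) * d ^+ 2 = (s + d) ^+ 2.
    by move=> s sq <-; field; rewrite !gt_eqF.
  by rewrite -(E _ sp) ?sqr_sqrtr //; apply: H; exact: divr_gt0.
have S2e : S2 = 0 by apply/eqP; rewrite eq_le S2z S20.
rewrite S2e sqrtr0 add0r; rewrite leNgt; apply/negP => hlt.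
have d2 : 0 < d ^+ 2 by rewrite exprn_gt0.
have t0 : 0 < 2 * d ^+ 2 / (S1 - d ^+ 2) by apply: divr_gt0; lra.
have := H _ t0; rewrite S2e mulr0 add0r.
have -> : (1 + (2 * d ^+ 2 / (S1 - d ^+ 2))^-1) * d ^+ 2 = d ^+ 2 + (S1 - d ^+ 2) / 2.
  field; rewrite ?gt_eqF //; lra.
lra.
Qed.

Lemma ptw (R : realType) (a1 a2 d t : R) : 0 <= a1 -> a1 <= a2 + d -> 0 <= a2 -> 0 <= d -> 0 < t ->
  a1 ^+ 2 <= (1 + t) * a2 ^+ 2 + (1 + t^-1) * d ^+ 2.
Proof.
move=> a10 a12 a20 d0 t0.
have h1 : a1 ^+ 2 <= (a2 + d) ^+ 2 by rewrite ler_sqr ?nnegrE //; lra.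
have e : (1 + t) * a2 ^+ 2 + (1 + t^-1) * d ^+ 2 - (a2 + d) ^+ 2 = t^-1 * (t * a2 - d) ^+ 2.
  by field; rewrite gt_eqF.
have : 0 <= t^-1 * (t * a2 - d) ^+ 2 by apply: mulr_ge0; [rewrite invr_ge0; lra| exact: sqr_ge0].
rewrite -e; lra.
Qed.
Section meas.
Context (d : measure_display) (T : measurableType d) (R : realType)
  (P : probability T R) (G : T -> R).
Hypothesis mG : measurable_fun setT G.
Hypothesis iG : P.-integrable setT (fun w => ((G w) ^+ 2)%:E).

Definition gy (y : R) := fun w => ppart (G w - y) ^+ 2.

Lemma gy_meas y : measurable_fun setT (gy y).
Proof.
apply: measurable_realfun.measurable_funX.
apply: (measurable_realfun.measurable_maxr (f := fun w => G w - y) (g := fun _ => 0)).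
  by apply: measurable_realfun.measurable_funB => //; exact: measurable_cst.
exact: measurable_cst.
Qed.

Lemma gy_int y : P.-integrable setT (EFin \o gy y).
Proof.
have gi : P.-integrable setT (fun w => (2 * G w ^+ 2)%:E + (2 * y ^+ 2)%:E).
  apply: (@integrableD _ _ _ _ _ measurableT (fun w => (2 * G w ^+ 2)%:E) (fun _ => (2 * y ^+ 2)%:E)).
    under eq_fun do rewrite EFinM.
    exact: integrableZl.
  exact: (finite_measure_integrable_cst P (2 * y ^+ 2) measurableT).
apply: le_integrable _ _ gi => //.
- exact/measurable_realfun.measurable_EFinP/gy_meas.
- move=> w _ /=; rewrite lee_fin !ger0_norm; last 2 first.
  + by apply: addr_ge0; apply: mulr_ge0 => //; exact: sqr_ge0.
  + exact: sqr_ge0.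
  rewrite /gy /ppart.
  have := sqr_ge0 (G w + y).
  case: (leP (G w - y) 0) => h.
  + rewrite expr0n /= => _; apply: addr_ge0; apply: mulr_ge0 => //; exact: sqr_ge0.
  + nra.
Qed.

Lemma gy_Lfun y : gy y \in Lfun P 1.
Proof. exact/Lfun1_integrable/gy_int. Qed.

Lemma gy_E y : ('E_P[gy y] = (fine 'E_P[gy y])%:E)%E.
Proof. by rewrite fineK // expectation_fin_num // gy_Lfun. Qed.


Lemma gy_ge0 y : 0 <= fine 'E_P[gy y].
Proof. by apply: fine_ge0; apply: expectation_ge0 => w; exact: sqr_ge0. Qed.

Lemma gy_le y1 y2 t : y1 < y2 -> 0 < t ->
  fine 'E_P[gy y1] <= (1 + t) * fine 'E_P[gy y2] + (1 + t^-1) * (y2 - y1) ^+ 2.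
Proof.
move=> y12 t0; set k := (1 + t^-1) * (y2 - y1) ^+ 2.
have L2 := gy_Lfun y2.
have Lc : cst k \in Lfun P 1.
  by apply/Lfun1_integrable; exact: finite_measure_integrable_cst.
have LZ : (1 + t) \o* gy y2 \in Lfun P 1.
  apply/Lfun1_integrable.
  apply: (eq_integrable measurableT _ _ _ (integrableZl measurableT (1 + t) (gy_int y2))).
  by move=> w _ /=; rewrite -EFinM mulrC.
have kge0 : 0 <= k by apply: mulr_ge0; [rewrite addr_ge0 // invr_ge0 ltW|exact: sqr_ge0].
have : ('E_P[gy y1] <= 'E_P[((1 + t) \o* gy y2) \+ cst k])%E.
  apply: expectation_le.
  - exact: gy_meas.
  - apply: measurable_realfun.measurable_funD; last exact: measurable_cst.
    apply: measurable_realfun.measurable_funM; last exact: measurable_cst.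
    exact: gy_meas.
  - by move=> w; exact: sqr_ge0.
  - move=> w /=; apply: addr_ge0 => //; apply: mulr_ge0; last by rewrite addr_ge0 // ltW.
    exact: sqr_ge0.
  - apply: aeW => w /=; rewrite /gy /ppart mulrC; apply: ptw => //.
    + by rewrite le_max lexx orbT.
    + have h1 : G w - y2 <= Num.max (G w - y2) 0 by rewrite le_max lexx.
      have h2 : 0 <= Num.max (G w - y2) 0 by rewrite le_max lexx orbT.
      by rewrite ge_max; apply/andP; split; lra.
    + by rewrite le_max lexx orbT.
    + by rewrite subr_ge0 ltW.
rewrite expectationD // expectationZl // expectation_cst (gy_E y1) (gy_E y2).
by rewrite -EFinM -EFinD lee_fin.
Qed.

End meas.

Lemma approx (R : realType) (c S y e : R) : 0 < c -> 0 <= S -> 0 < e ->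
  exists2 z, 0 < z & c / z * S + y + c / 4 * z <= y + c * Num.sqrt S + e.
Proof.
move=> c0 S0 e0; have [Sp|Sn] := ltP 0 S.
  exists (2 * Num.sqrt S); first by rewrite mulr_gt0 // sqrtr_gt0.
  by rewrite attain //; lra.
have -> : S = 0 by apply/eqP; rewrite eq_le Sn S0.
exists (4 * e / c); first by rewrite divr_gt0 // mulr_gt0.
rewrite sqrtr0 !mulr0 add0r addr0.
have -> : c / 4 * (4 * e / c) = e by field; rewrite gt_eqF.
by [].
Qed.

Theorem lemma2 (d : measure_display) (T : measurableType d) (R : realType)
  (P : probability T R) (n : nat) (X : set 'rV[R]_n)
  (F : 'rV[R]_n -> T -> R) (c : R) :
  (forall x, X x -> measurable_fun setT (F x)) ->
  (forall x, X x -> P.-integrable setT (fun w => ((F x w) ^+ 2)%:E)) ->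
  0 < c <= 1 ->
  (forall x y, X x ->
     inf [set phi P c F x y z | z in `]0, +oo[%classic] = Phi P c F x y /\
     (0 < sqpart P F x y ->
        phi P c F x y (2 * Num.sqrt (sqpart P F x y)) = Phi P c F x y)) /\
  (forall x, X x ->
     inf [set r | exists y z, fmean P F x <= y /\ 0 < z /\ r = phi P c F x y z]
       = hfun P c F x /\
     inf [set Phi P c F x y | y in `[fmean P F x, +oo[%classic] = hfun P c F x /\
     Phi P c F x (fmean P F x) = hfun P c F x /\
     (0 < sqpart P F x (fmean P F x) ->
        phi P c F x (fmean P F x) (2 * Num.sqrt (sqpart P F x (fmean P F x)))
          = hfun P c F x)).
Proof.
move=> mF iF /andP[c0 c1].
have Sge0 : forall x y, 0 <= sqpart P F x y.
  by move=> x y; exact: gy_ge0.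
have lowz : forall x y z, 0 < z -> Phi P c F x y <= phi P c F x y z.
  by move=> x y z z0; rewrite /Phi /phi; apply: amgm.
have apz : forall x y e, 0 < e -> exists2 z, 0 < z & phi P c F x y z <= Phi P c F x y + e.
  by move=> x y e e0; rewrite /Phi /phi; apply: approx.
split.
  move=> x y Xx; split; last by move=> Sp; rewrite /phi /Phi attain.
  apply: inf_eq.
    by move=> a [z z0 <-]; apply: lowz; move: z0; rewrite /= in_itv /= andbT.
  move=> e e0; have [z z0 h] := apz x y e e0.
  by exists (phi P c F x y z) => //; exists z => //=; rewrite in_itv /= andbT.
move=> x Xx.
have mono : forall y1 y2, y1 <= y2 -> Phi P c F x y1 <= Phi P c F x y2.
  move=> y1 y2; rewrite le_eqVlt => /orP[/eqP -> //|y12].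
  have y12' : 0 < y2 - y1 by rewrite subr_gt0.
  have k : Num.sqrt (sqpart P F x y1) <= Num.sqrt (sqpart P F x y2) + (y2 - y1).
    apply: sqrt_key => // t t0.
    exact: (@gy_le _ _ _ P (F x) (mF x Xx) (iF x Xx) _ _ _ y12 t0).
  have h : c * Num.sqrt (sqpart P F x y1) <= c * (Num.sqrt (sqpart P F x y2) + (y2 - y1)).
    by rewrite ler_wpM2l // ltW.
  rewrite /Phi; nra.
have hE : hfun P c F x = Phi P c F x (fmean P F x) by [].
rewrite hE; split; last split; last split => //; last first.
  by move=> Sp; rewrite /phi /Phi attain.
- apply: inf_eq.
    by move=> a [y y0 <-]; apply: mono; move: y0; rewrite /= in_itv /= andbT.
  move=> e e0; exists (Phi P c F x (fmean P F x)); last by rewrite lerDl ltW.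
  by exists (fmean P F x) => //=; rewrite in_itv /= lexx.
- apply: inf_eq.
    move=> a [y [z [y0 [z0 ->]]]]; apply: le_trans (mono _ _ y0) _; exact: lowz.
  move=> e e0; have [z z0 h] := apz x (fmean P F x) e e0.
  by exists (phi P c F x (fmean P F x) z) => //; exists (fmean P F x), z.
Qed.
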